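(* Let $L:\mathbb{R}^d\to\mathbb{R}^{\mathcal{Y}}_+$ be a polyhedral loss which indirectly elicits a finite property $\gamma:\Delta_{\mathcal{Y}}\rightrightarrows\mathcal{R}$. Then for any loss $\ell:\mathcal{R}\to\mathbb{R}^{\mathcal{Y}}_+$ eliciting $\gamma$, there exists a link $\psi:\mathbb{R}^d\to\mathcal{R}$ such that $(L,\psi)$ is calibrated with respect to $\ell$.
   Context: $\mathcal{Y}$ is a finite label set, $\Delta_{\mathcal{Y}}$ the probability simplex, $\mathbb{R}^{\mathcal{Y}}_+$ the nonnegative orthant. A property is a map $\Gamma:\Delta_{\mathcal{Y}}\rightrightarrows\mathcal{R}$ assigning to each $p$ a nonempty subset of $\mathcal{R}$; it is finite if $\mathcal{R}$ is finite; its level sets are $\Gamma_r=\{p:r\in\Gamma(p)\}$. A loss $L:\mathcal{R}\to\mathbb{R}^{\mathcal{Y}}_+$ elicits $\Gamma$ if $\Gamma(p)=\arg\min_{r\in\mathcal{R}}\langle p,L(r)\rangle$ for all $p$ (requiring the minimum to be attained); write $\mathrm{prop}[L]$ for this property. $L:\mathbb{R}^d\to\mathbb{R}^{\mathcal{Y}}_+$ is polyhedral if each coordinate is a pointwise maximum of finitely many affine functions (polyhedral losses elicit a property). A loss $L$ eliciting $\Gamma$ indirectly elicits $\gamma:\Delta_{\mathcal{Y}}\rightrightarrows\mathcal{R}$ if for every $u$ there is $r\in\mathcal{R}$ with $\Gamma_u\subseteq\gamma_r$. $(L,\psi)$ is calibrated with respect to $\ell$ if for all $p$, $\inf_{u:\psi(u)\notin\mathrm{prop}[\ell](p)}\langle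 p,L(u)\rangle>\inf_{u}\langle p,L(u)\rangle$ (infimum over the empty set is $+\infty$). *)

(* Defs.v *)
From HB Require Import structures.
From mathcomp Require Import all_boot all_order all_algebra.
From mathcomp Require Import all_classical all_reals ereal.
Set Implicit Arguments. Unset Strict Implicit. Unset Printing Implicit Defensive.
Import Order.TTheory GRing.Theory Num.Theory.
Local Open Scope ring_scope.
Local Open Scope classical_set_scope.

Section Defs.
Variable R : realType.
Variable Y : finType.

Definition simplex (p : Y -> R) : Prop :=
  (forall y, 0 <= p y) /\ \sum_(y : Y) p y = 1.

Definition expect (p : Y -> R) (v : Y -> R) : R := \sum_(y : Y) p y * v y.

Definition is_property (Rep : Type) (G : (Y -> R) -> Rep -> Prop) : Prop :=
  forall p, simplex p -> exists r, G p r.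

Definition nonneg_loss (Rep : Type) (L : Rep -> Y -> R) : Prop :=
  forall r y, 0 <= L r y.

Definition prop (Rep : Type) (L : Rep -> Y -> R) (p : Y -> R) (r : Rep) : Prop :=
  forall r', expect p (L r) <= expect p (L r').

(* L elicits G: G(p) = argmin (and G is a property, so the minimum is attained) *)
Definition elicits (Rep : Type) (L : Rep -> Y -> R) (G : (Y -> R) -> Rep -> Prop) : Prop :=
  is_property G /\ forall p, simplex p -> forall r, G p r <-> prop L p r.

Definition affine_eval (d : nat) (a : 'rV[R]_d) (b : R) (u : 'rV[R]_d) : R :=
  \sum_(i < d) a 0 i * u 0 i + b.

Definition polyhedral (d : nat) (L : 'rV[R]_d -> Y -> R) : Prop :=
  forall y, exists (n : nat) (a : 'I_n.+1 -> 'rV[R]_d) (b : 'I_n.+1 -> R),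
    forall u, L u y = \big[Num.max/affine_eval (a ord0) (b ord0) u]_(i < n.+1)
                        affine_eval (a i) (b i) u.

Definition indirectly_elicits (Rep : Type) (d : nat) (L : 'rV[R]_d -> Y -> R)
    (gamma : (Y -> R) -> Rep -> Prop) : Prop :=
  elicits L (prop L) /\
  forall u, exists r, forall p, simplex p -> prop L p u -> gamma p r.

(* (L, psi) calibrated w.r.t. ell, with infima in the extended reals
   (so that the infimum over the empty set is +oo) *)
Definition calibrated (Rep : Type) (d : nat) (L : 'rV[R]_d -> Y -> R)
    (psi : 'rV[R]_d -> Rep) (ell : Rep -> Y -> R) : Prop :=
  forall p, simplex p ->
    (ereal_inf [set (expect p (L u))%:E | u in setT]
      < ereal_inf [set (expect p (L u))%:E | u in [set u | ~ prop ell p (psi u)]])%E.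

End Defs.

(* Main.v *)
Require Import Defs.
From mathcomp Require Import all_boot all_order all_algebra.
From mathcomp Require Import all_classical all_reals ereal.
From mathcomp Require Import lra.
Set Implicit Arguments. Unset Strict Implicit. Unset Printing Implicit Defensive.
Import Order.TTheory GRing.Theory Num.Theory.
Local Open Scope ring_scope.



Definition dot (R : realType) (d : nat) (a u : 'rV[R]_d) : R :=
  \sum_(i < d) a 0 i * u 0 i.

Lemma dotDr (R : realType) (d : nat) (a u v : 'rV[R]_d) :
  dot a (u + v) = dot a u + dot a v.
Proof. by rewrite /dot -big_split /=; apply: eq_bigr => i _; rewrite !mxE mulrDr. Qed.

Lemma dotZr (R : realType) (d : nat) (a u : 'rV[R]_d) t :
  dot a (t *: u) = t * dot a u.
Proof. by rewrite /dot mulr_sumr; apply: eq_bigr => i _; rewrite !mxE mulrCA. Qed.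

Lemma dotDl (R : realType) (d : nat) (a b u : 'rV[R]_d) :
  dot (a + b) u = dot a u + dot b u.
Proof. by rewrite /dot -big_split /=; apply: eq_bigr => i _; rewrite !mxE mulrDl. Qed.

Lemma dotZl (R : realType) (d : nat) (a u : 'rV[R]_d) t :
  dot (t *: a) u = t * dot a u.
Proof. by rewrite /dot mulr_sumr; apply: eq_bigr => i _; rewrite !mxE mulrA. Qed.

Lemma dotNl (R : realType) (d : nat) (a u : 'rV[R]_d) :
  dot (- a) u = - dot a u.
Proof. by rewrite -scaleN1r dotZl mulN1r. Qed.

Lemma dot0l (R : realType) (d : nat) (u : 'rV[R]_d) : dot 0 u = 0.
Proof. by rewrite /dot big1 // => i _; rewrite mxE mul0r. Qed.

Lemma dot_suml (R : realType) (d : nat) (I : finType) (F : I -> 'rV[R]_d) u :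
  dot (\sum_i F i) u = \sum_i dot (F i) u.
Proof.
rewrite /dot exchange_big /=; apply: eq_bigr => j _.
by rewrite summxE mulr_suml.
Qed.

Definition trunc (R : realType) (d : nat) (u : 'rV[R]_d.+1) : 'rV[R]_d :=
  \row_(j < d) u 0 (widen_ord (leqnSn d) j).

Definition ext (R : realType) (d : nat) (u : 'rV[R]_d) (x : R) : 'rV[R]_d.+1 :=
  \row_(j < d.+1) (match unlift ord_max j with Some j' => u 0 j' | None => x end).

Lemma dot_split (R : realType) (d : nat) (a u : 'rV[R]_d.+1) :
  dot a u = dot (trunc a) (trunc u) + a 0 ord_max * u 0 ord_max.
Proof. by rewrite /dot big_ord_recr /=; congr (_ + _); apply: eq_bigr => i _; rewrite !mxE. Qed.

Lemma trunc_ext (R : realType) (d : nat) (u : 'rV[R]_d) x : trunc (ext u x) = u.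
Proof.
apply/rowP => j; rewrite !mxE.
have -> : widen_ord (leqnSn d) j = lift ord_max j by by apply: val_inj; rewrite /= /bump leqNgt ltn_ord.
by rewrite liftK.
Qed.

Lemma ext_max (R : realType) (d : nat) (u : 'rV[R]_d) x : ext u x 0 ord_max = x.
Proof. by rewrite mxE unlift_none. Qed.

Lemma interp (R : realType) (ls us : seq R) :
  (forall l u, l \in ls -> u \in us -> l <= u) ->
  exists x, (forall l, l \in ls -> l <= x) /\ (forall u, u \in us -> x <= u).
Proof.
elim: ls => [|l ls IH] H.
  elim: us H => [|u us IHu] H; first by exists 0.
  case: (IHu _) => [l0 u0 //|x [_ Hx]].
  exists (Num.min x u); split => // v; rewrite inE => /orP [/eqP -> | hv].
    by rewrite ge_min lexx orbT.
  by rewrite ge_min Hx.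
have [x [H1 H2]] : exists x, (forall l, l \in ls -> l <= x) /\ (forall u, u \in us -> x <= u).
  by apply: IH => l' u' hl hu; apply: H => //; rewrite inE hl orbT.
exists (Num.max x l); split.
  move=> l'; rewrite inE => /orP [/eqP -> | hl]; first by rewrite le_max lexx orbT.
  by rewrite le_max H1.
by move=> u hu; rewrite ge_max H2 //= H // inE eqxx.
Qed.



Lemma closure_core (R : realType) (d : nat) : forall (K : finType)
  (c : K -> 'rV[R]_d) (e : K -> R),
  (forall eps, 0 < eps -> exists u, forall k, dot (c k) u <= e k + eps) ->
  exists u, forall k, dot (c k) u <= e k.
Proof.
elim: d => [|d IH] K c e H.
  exists 0 => k; apply/ler_addgt0Pr => eps he.
  have [u Hu] := H eps he; have := Hu k.
  by rewrite /dot !big_ord0.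
pose cx k := c k 0 ord_max.
pose tc k := trunc (c k).
pose c' (kj : K * K) : 'rV[R]_d := let (k, j) := kj in
  if (cx k == 0) && (k == j) then tc k
  else if (0 < cx k) && (cx j < 0) then
    (cx k - cx j)^-1 *: ((- cx j) *: tc k + cx k *: tc j)
  else 0.
pose e' (kj : K * K) : R := let (k, j) := kj in
  if (cx k == 0) && (k == j) then e k
  else if (0 < cx k) && (cx j < 0) then
    (cx k - cx j)^-1 * ((- cx j) * e k + cx k * e j)
  else 0.
have H' : forall eps, 0 < eps -> exists u, forall kj, dot (c' kj) u <= e' kj + eps.
  move=> eps he; have [u Hu] := H eps he; exists (trunc u); case=> k j /=.
  case: ifP => [/andP[/eqP ck0 _]|_].
    by have := Hu k; rewrite dot_split -/(cx k) ck0 mul0r addr0.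
  case: ifP => [/andP[ckp cjn]|_]; last by rewrite dot0l add0r ltW.
  rewrite dotZl dotDl !dotZl.
  have hk := Hu k; have hj := Hu j; rewrite dot_split in hk; rewrite dot_split in hj.
  rewrite -/(cx k) -/(tc k) in hk; rewrite -/(cx j) -/(tc j) in hj.
  set s := cx k - cx j.
  have hs : 0 < s by rewrite /s; lra.
  rewrite -(ler_pM2l hs) !mulrDr !mulrA divff ?gt_eqF // !mul1r.
  set a := dot (tc k) (trunc u) in hk *; set b := dot (tc j) (trunc u) in hj *.
  set x := u 0 ord_max in hk hj.
  rewrite /s; nra.
have [u' Hu'] := IH _ c' e' H'.
pose lo j := (e j - dot (tc j) u') / cx j.
have Hlu : forall l v, l \in [seq lo j | j <- [seq j <- enum K | cx j < 0]] ->
   v \in [seq lo j | j <- [seq j <- enum K | 0 < cx j]] -> l <= v.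
  move=> l v /mapP [j]; rewrite mem_filter => /andP [cjn _] -> /mapP [k].
  rewrite mem_filter => /andP [ckp _] ->.
  have := Hu' (k, j); rewrite /c' /e' (gt_eqF ckp) /= ckp cjn /=.
  rewrite dotZl dotDl !dotZl.
  set s := cx k - cx j.
  have hs : 0 < s by rewrite /s; lra.
  rewrite -(ler_pM2l hs) !mulrDr !mulrA divff ?gt_eqF // !mul1r => h.
  rewrite /lo ler_ndivrMr // mulrAC ler_pdivrMr //.
  set a := dot (tc k) u' in h *; set b := dot (tc j) u' in h *.
  nra.
have [x [Hl Hu]] := interp Hlu.
exists (ext u' x) => k.
rewrite dot_split trunc_ext ext_max -/(cx k) -/(tc k).
have [ckn|ckp|ck0] := ltgtP (cx k) 0.
- have := Hl (lo k); rewrite /lo ler_ndivrMr //.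
  move=> /(_ (map_f _ _)); rewrite mem_filter ckn mem_enum => /(_ isT).
  move=> h; nra.
- have := Hu (lo k); rewrite /lo ler_pdivlMr //.
  move=> /(_ (map_f _ _)); rewrite mem_filter ckp mem_enum => /(_ isT).
  move=> h; nra.
- have := Hu' (k, k); rewrite /c' /e' -/(cx k) ck0 !eqxx /= => h.
  by rewrite mul0r addr0.
Qed.



Definition affine (R : realType) (d : nat) (g : 'rV[R]_d -> R) :=
  exists c e, forall u, g u = dot c u + e.

Lemma poly_closure (R : realType) (d : nat) (K : finType) (g : K -> 'rV[R]_d -> R) :
  (forall k, affine (g k)) ->
  (forall eps, 0 < eps -> exists u, forall k, g k u <= eps) ->
  exists u, forall k, g k u <= 0.
Proof.
move=> Ha H.
have [c Hc] := fin_all_exists Ha.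
have [e He] := fin_all_exists Hc.
have H' : forall eps, 0 < eps -> exists u, forall k, dot (c k) u <= - e k + eps.
  move=> eps he; have [u Hu] := H eps he; exists u => k.
  by have := Hu k; rewrite He; lra.
have [u Hu] := closure_core H'.
by exists u => k; have := Hu k; rewrite He; lra.
Qed.

Lemma affine_dot (R : realType) (d : nat) (a : 'rV[R]_d) b :
  affine (fun u => dot a u + b).
Proof. by exists a, b. Qed.

Lemma affine_cst (R : realType) (d : nat) (b : R) :
  affine (fun u : 'rV[R]_d => b).
Proof. by exists 0, b => u; rewrite dot0l add0r. Qed.

Lemma affine_add (R : realType) (d : nat) (f g : 'rV[R]_d -> R) :
  affine f -> affine g -> affine (fun u => f u + g u).
Proof.
move=> [c [e H]] [c' [e' H']]; exists (c + c'), (e + e') => u.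
by rewrite H H' dotDl; lra.
Qed.

Lemma affine_scale (R : realType) (d : nat) (f : 'rV[R]_d -> R) t :
  affine f -> affine (fun u => t * f u).
Proof.
move=> [c [e H]]; exists (t *: c), (t * e) => u.
by rewrite H dotZl mulrDr.
Qed.

Lemma affine_sum (R : realType) (d : nat) (I : finType) (f : I -> 'rV[R]_d -> R) :
  (forall i, affine (f i)) -> affine (fun u => \sum_i f i u).
Proof.
move=> H.
have [c Hc] := fin_all_exists H.
have [e He] := fin_all_exists Hc.
exists (\sum_i c i), (\sum_i e i) => u.
rewrite dot_suml -big_split /=; apply: eq_bigr => i _; exact: He.
Qed.

Lemma small_seq (R : realType) (I : eqType) (P : I -> R -> Prop) (s : seq I) :
  (forall i, exists2 t0, 0 < t0 & forall t, 0 < t -> t <= t0 -> P i t) ->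
  exists2 t0, 0 < t0 & forall i, i \in s -> forall t, 0 < t -> t <= t0 -> P i t.
Proof.
move=> H; elim: s => [|i s [t1 t1p Ht1]]; first by exists 1.
have [t2 t2p Ht2] := H i.
exists (Num.min t1 t2); first by rewrite lt_min t1p t2p.
move=> j; rewrite inE => /orP [/eqP -> | js] t tp; rewrite le_min => /andP [h1 h2].
  exact: Ht2.
exact: Ht1.
Qed.

Lemma small (R : realType) (I : finType) (P : I -> R -> Prop) :
  (forall i, exists2 t0, 0 < t0 & forall t, 0 < t -> t <= t0 -> P i t) ->
  exists2 t, 0 < t & forall i, P i t.
Proof.
move=> H; have [t0 t0p Ht0] := small_seq (enum I) H.
exists t0 => // i; apply: Ht0 => //; exact: mem_enum.
Qed.

Lemma pigeon (R : realType) (I : finType) (Q : I -> R -> Prop) :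
  (forall i a b, 0 < a -> a <= b -> Q i a -> Q i b) ->
  (forall eps, 0 < eps -> exists i, Q i eps) ->
  exists i, forall eps, 0 < eps -> Q i eps.
Proof.
move=> Hm H; apply: contrapT => /forallNP Hn.
have Hn' : forall i, exists2 t0, 0 < t0 & forall t, 0 < t -> t <= t0 -> ~ Q i t.
  move=> i; have /existsNP [t0] := Hn i.
  move=> /not_implyP [t0p nQ]; exists t0 => // t tp tle Qt.
  by apply: nQ; apply: (Hm i t).
have [t tp Ht] := small Hn'.
by have [i Qi] := H t tp; exact: (Ht i).
Qed.

Lemma small_lin (R : realType) (g c : R) : 0 < g ->
  exists2 t0, 0 < t0 & forall t, 0 < t -> t <= t0 -> t * c < g /\ t <= 1.
Proof.
move=> gp; exists (Num.min 1 (g / (`|c| + 1))).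
  by rewrite lt_min ltr01 divr_gt0 // ltr_pwDr.
move=> t tp; rewrite le_min => /andP [t1 tg]; split => //.
have hc : 0 < `|c| + 1 by rewrite ltr_pwDr.
move: tg; rewrite ler_pdivlMr // => tg.
have := ler_norm c; nra.
Qed.

Lemma small1 (R : realType) (I : finType) (P : I -> R -> Prop) :
  (forall i, exists2 t0, 0 < t0 & forall t, 0 < t -> t <= t0 -> P i t) ->
  exists2 t, 0 < t & t <= 1 /\ forall i, P i t.
Proof.
move=> H; have [t0 t0p Ht0] := small_seq (enum I) H.
exists (Num.min t0 1); first by rewrite lt_min t0p ltr01.
split; first by rewrite ge_min lexx orbT.
move=> i; apply: Ht0; first exact: mem_enum.
  by rewrite lt_min t0p ltr01.
by rewrite ge_min lexx.
Qed.



Lemma extract (R : realType) (Y : finType) (d : nat) (L : 'rV[R]_d -> Y -> R) :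
  polyhedral L -> exists (N : nat) (al : Y -> 'I_N.+1 -> 'rV[R]_d)
    (be : Y -> 'I_N.+1 -> R),
  (forall y i u, dot (al y i) u + be y i <= L u y) /\
  (forall y u, exists i, dot (al y i) u + be y i = L u y).
Proof.
move=> HP.
have H0 : forall y, exists nab : nat * (nat -> 'rV[R]_d) * (nat -> R),
    forall u, (forall i, (i <= nab.1.1)%N -> dot (nab.1.2 i) u + nab.2 i <= L u y) /\
      exists2 i, (i <= nab.1.1)%N & dot (nab.1.2 i) u + nab.2 i = L u y.
  move=> y; have [n [a [b Hab]]] := HP y.
  exists (n, fun i => a (inord i), fun i => b (inord i)) => u; rewrite Hab; split.
    move=> i hi /=.
    exact: (@le_bigmax _ _ _ _ (fun j : 'I_n.+1 => affine_eval (a j) (b j) u) (inord i)).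
  have : exists i : 'I_n.+1, \big[Num.max/affine_eval (a ord0) (b ord0) u]_(i0 < n.+1)
      affine_eval (a i0) (b i0) u = affine_eval (a i) (b i) u.
    apply: (big_ind (fun m => exists i : 'I_n.+1, m = affine_eval (a i) (b i) u)).
    - by exists ord0.
    - move=> x y' [i1 ->] [i2 ->]; rewrite maxEle; case: ifP => _.
        by exists i2.
      by exists i1.
    - by move=> i _; exists i.
  move=> [i Hi]; exists (val i); first by rewrite /= -ltnS ltn_ord.
  by rewrite /= inord_val Hi.
have [f Hf] := choice H0.
pose N := (\max_(y : Y) (f y).1.1)%N.
exists N, (fun y i => (f y).1.2 (minn i (f y).1.1)),
  (fun y i => (f y).2 (minn i (f y).1.1)); split.
  by move=> y i u; have [H1 _] := Hf y u; apply: H1; exact: geq_minr.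
move=> y u; have [_ [i0 hi0 H2]] := Hf y u.
have hN : (i0 < N.+1)%N.
  by rewrite ltnS (leq_trans hi0) //; exact: (leq_bigmax_cond (F := fun y => (f y).1.1) (P := xpredT) y).
exists (inord i0); rewrite /= inordK // (minn_idPl hi0); exact: H2.
Qed.



Lemma dotBr (R : realType) (d : nat) (a u v : 'rV[R]_d) :
  dot a (u - v) = dot a u - dot a v.
Proof. by rewrite dotDr -scaleN1r dotZr mulN1r. Qed.

Lemma mono (R : realType) (Y : finType) (d N : nat) (L : 'rV[R]_d -> Y -> R)
  (al : Y -> 'I_N.+1 -> 'rV[R]_d) (be : Y -> 'I_N.+1 -> R) (p : Y -> R) :
  (forall y i u, dot (al y i) u + be y i <= L u y) ->
  (forall y u, exists i, dot (al y i) u + be y i = L u y) ->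
  (forall y, 0 <= p y) ->
  forall x v, (forall u', expect p (L x) <= expect p (L u')) ->
  (forall y i, dot (al y i) x + be y i = L x y -> dot (al y i) v + be y i = L v y) ->
  forall u', expect p (L v) <= expect p (L u').
Proof.
move=> H1 H2 pge x v Hx Hxv u'.
set w := u' - v.
have [ix Hix] := fin_all_exists (fun y => H2 y x).
have Hs : forall yj : Y * 'I_N.+1, exists2 t0, 0 < t0 & forall t, 0 < t -> t <= t0 ->
   (dot (al yj.1 yj.2) x + be yj.1 yj.2 < L x yj.1 ->
    t * (dot (al yj.1 yj.2) w - dot (al yj.1 (ix yj.1)) w)
      < L x yj.1 - (dot (al yj.1 yj.2) x + be yj.1 yj.2)).
  case=> y j /=.
  case: (ltP (dot (al y j) x + be y j) (L x y)) => h.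
    have hg : 0 < L x y - (dot (al y j) x + be y j) by rewrite subr_gt0.
    have [t0 t0p Ht0] := small_lin (dot (al y j) w - dot (al y (ix y)) w) hg.
    by exists t0 => // t tp tle _; have [] := Ht0 t tp tle.
  by exists 1 => // t _ _ h'; exfalso; move: h h'; rewrite leNgt => /negP.
have [t tp [t1 Ht]] := small1 Hs.
have Hy : forall y, L (x + t *: w) y - L x y <= L (v + t *: w) y - L v y.
  move=> y; have [j Hj] := H2 y (x + t *: w).
  rewrite dotDr dotZr in Hj.
  have Hjv := H1 y j (v + t *: w); rewrite dotDr dotZr in Hjv.
  have [hact|hin] := eqVneq (dot (al y j) x + be y j) (L x y).
    have := Hxv y j hact; lra.
  have hlt : dot (al y j) x + be y j < L x y by rewrite lt_neqAle hin H1.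
  have h := Ht (y, j) hlt; rewrite /= mulrBr in h.
  have Hi := H1 y (ix y) (x + t *: w); rewrite dotDr dotZr in Hi.
  have := Hix y; lra.
have Hc : forall y, L (v + t *: w) y <= (1 - t) * L v y + t * L u' y.
  move=> y; have [j Hj] := H2 y (v + t *: w); rewrite -Hj dotDr dotZr /w dotBr.
  have h1 := H1 y j v; have h2 := H1 y j u'.
  have t1' : 0 <= 1 - t by rewrite subr_ge0.
  have h1' := ler_wpM2l t1' h1.
  have h2' := ler_wpM2l (ltW tp) h2.
  lra.
have key : \sum_y p y * (L (x + t *: w) y - L x y) <=
           \sum_y p y * (t * (L u' y - L v y)).
  by apply: ler_sum => y _; apply: ler_wpM2l => //; have := Hy y; have := Hc y; lra.
move: key.
under [X in _ <= X]eq_bigr do rewrite mulrCA.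
rewrite -mulr_sumr.
under eq_bigr do rewrite mulrBr.
rewrite sumrB.
under [X in _ <= t * X]eq_bigr do rewrite mulrBr.
rewrite sumrB => key.
have := Hx (x + t *: w); rewrite /expect => hx.
have : 0 <= t * (\sum_y p y * L u' y - \sum_y p y * L v y).
  by apply: le_trans key; rewrite subr_ge0.
by rewrite pmulr_rge0 // subr_ge0.
Qed.



Lemma affine_sub (R : realType) (d : nat) (f g : 'rV[R]_d -> R) :
  affine f -> affine g -> affine (fun u => f u - g u).
Proof.
move=> [c [e H]] [c' [e' H']]; exists (c - c'), (e - e') => u.
by rewrite H H' dotDl dotNl; lra.
Qed.

Lemma sel_eq (R : realType) (Y : finType) (d N : nat) (L : 'rV[R]_d -> Y -> R)
  (al : Y -> 'I_N.+1 -> 'rV[R]_d) (be : Y -> 'I_N.+1 -> R) :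
  (forall y i u, dot (al y i) u + be y i <= L u y) ->
  (forall y u, exists i, dot (al y i) u + be y i = L u y) ->
  forall y s u, (forall k, dot (al y k) u + be y k <= dot (al y s) u + be y s) ->
  dot (al y s) u + be y s = L u y.
Proof.
move=> H1 H2 y s u Hk; apply/eqP; rewrite eq_le H1 /=.
by have [j <-] := H2 y u; exact: Hk.
Qed.

Lemma stepD (R : realType) (Y : finType) (d N : nat) (L : 'rV[R]_d -> Y -> R)
  (al : Y -> 'I_N.+1 -> 'rV[R]_d) (be : Y -> 'I_N.+1 -> R) :
  (forall y i u, dot (al y i) u + be y i <= L u y) ->
  (forall y u, exists i, dot (al y i) u + be y i = L u y) ->
  let A (eps : R) (u : 'rV[R]_d) : {set Y * 'I_N.+1} :=
     [set yi | L u yi.1 - eps <= dot (al yi.1 yi.2) u + be yi.1 yi.2] in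
  exists2 e0, 0 < e0 & forall u, exists v, A e0 u \subset A 0 v.
Proof.
move=> H1 H2 A.
have HS : forall S : {set Y * 'I_N.+1}, exists2 t0, 0 < t0 & forall t, 0 < t -> t <= t0 ->
    (exists v, S \subset A 0 v) \/ (forall u, ~ S \subset A t u).
  move=> S; case: (pselect (exists v, S \subset A 0 v)) => [hd|nd].
    by exists 1 => // t _ _; left.
  apply: contrapT => Hn; apply: nd.
  have Hall : forall eps, 0 < eps -> exists u, S \subset A eps u.
    move=> eps ep; apply: contrapT => Hu; apply: Hn; exists eps => // t tp te.
    right => u Su; apply: Hu; exists u; apply: (fintype.subset_trans Su).
    apply/fintype.subsetP => yi; rewrite !inE; lra.
  pose Q := fun (s : {ffun Y -> 'I_N.+1}) eps => exists u,
     (forall y k, dot (al y k) u + be y k <= dot (al y (s y)) u + be y (s y)) /\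
     S \subset A eps u.
  have Qm : forall s a b, 0 < a -> a <= b -> Q s a -> Q s b.
    move=> s a b ap ab [u [hu hS]]; exists u; split => //.
    apply: (fintype.subset_trans hS); apply/fintype.subsetP => yi; rewrite !inE; lra.
  have Qh : forall eps, 0 < eps -> exists s, Q s eps.
    move=> eps ep; have [u hu] := Hall eps ep.
    have [s Hs] := fin_all_exists (fun y => H2 y u).
    exists [ffun y => s y], u; split => // y k; rewrite ffunE Hs; exact: H1.
  have [s Hs] := pigeon Qm Qh.
  pose g (k : option ((Y * 'I_N.+1) * bool)) : 'rV[R]_d -> R :=
    match k with
    | None => fun _ => 0
    | Some (yi, true) => fun u => (dot (al yi.1 yi.2) u + be yi.1 yi.2) -
                         (dot (al yi.1 (s yi.1)) u + be yi.1 (s yi.1))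
    | Some (yi, false) => if yi \in S then fun u =>
                          (dot (al yi.1 (s yi.1)) u + be yi.1 (s yi.1)) -
                          (dot (al yi.1 yi.2) u + be yi.1 yi.2) else fun _ => 0
    end.
  have ga : forall k, affine (g k).
    case=> [[yi []]|]; rewrite /g.
    + by apply: affine_sub; apply: affine_dot.
    + by case: (yi \in S); [apply: affine_sub; apply: affine_dot | apply: affine_cst].
    + exact: affine_cst.
  have gh : forall eps, 0 < eps -> exists u, forall k, g k u <= eps.
    move=> eps ep; have [u [hk hS]] := Hs eps ep; exists u.
    case=> [[[y i] []]|]; rewrite /g /=.
    + by have := hk y i; lra.
    + case: ifP => hi; last by lra.
      move/fintype.subsetP: hS => /(_ _ hi); rewrite inE /= -(sel_eq H1 H2 (hk y)); lra.
    + by lra.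
  have [v Hv] := poly_closure ga gh.
  exists v; apply/fintype.subsetP => -[y i] hi; rewrite inE /=.
  have hk : forall k, dot (al y k) v + be y k <= dot (al y (s y)) v + be y (s y).
    by move=> k; have := Hv (Some ((y, k), true)); rewrite /g /=; lra.
  have := Hv (Some ((y, i), false)); rewrite /g /= hi -(sel_eq H1 H2 hk); lra.
have [e0 e0p He0] := small HS.
exists e0 => // u; have [[v hv]|hn] := He0 (A e0 u).
  by exists v.
by exfalso; apply: (hn u); exact: subxx.
Qed.



Theorem theorem8 (R : realType) (Y Rep : finType) (d : nat)
    (L : 'rV[R]_d -> Y -> R) (gamma : (Y -> R) -> Rep -> Prop) :
  nonneg_loss L -> polyhedral L ->
  is_property gamma -> indirectly_elicits L gamma ->
  forall ell : Rep -> Y -> R, nonneg_loss ell -> elicits ell gamma ->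
  exists psi : 'rV[R]_d -> Rep, calibrated L psi ell.
Proof.
move=> _ HP _ [[HLprop _] Hind] ell _ [_ Hell].
have [N [al [be [H1 H2]]]] := extract HP.
have [e0 e0p HD] := stepD H1 H2.
set A := (fun (eps : R) (u : 'rV[R]_d) =>
  [set yi | L u yi.1 - eps <= dot (al yi.1 yi.2) u + be yi.1 yi.2]) in HD.
have [vf Hvf] := choice HD.
have [rf Hrf] := choice Hind.
exists (fun u => rf (vf u)) => p sp.
have pge : forall y, 0 <= p y by case: sp.
have [u0 Hu0] := HLprop p sp.
set B := expect p (L u0).
have HB : forall u, B <= expect p (L u) by move=> u; exact: Hu0.
suff [de dep Hde] : exists2 de, 0 < de & forall u, ~ prop ell p (rf (vf u)) ->
    B + de <= expect p (L u).
  apply: (@le_lt_trans _ _ B%:E).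
    by apply: ereal_inf_lbound; exists u0.
  apply: (@lt_le_trans _ _ (B + de)%:E); first by rewrite lte_fin ltrDl.
  apply: le_ereal_inf_tmp => _ [u hu <-]; rewrite lee_fin; exact: Hde.
apply: contrapT => Hn.
have Hn' : forall de, 0 < de -> exists u, ~ prop ell p (rf (vf u)) /\
    expect p (L u) <= B + de.
  move=> de dep; apply: contrapT => H; apply: Hn; exists de => // u bu.
  apply: contrapT => hlt; apply: H; exists u; split => //.
  by apply: ltW; rewrite ltNge; apply/negP.
pose Q := fun (Ss : {set Y * 'I_N.+1} * {ffun Y -> 'I_N.+1}) de => exists u,
  [/\ ~ prop ell p (rf (vf u)), expect p (L u) <= B + de, A e0 u = Ss.1 &
   forall y k, dot (al y k) u + be y k <= dot (al y (Ss.2 y)) u + be y (Ss.2 y)].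
have Qm : forall Ss a b, 0 < a -> a <= b -> Q Ss a -> Q Ss b.
  move=> Ss a b ap ab [u [h1 h2 h3 h4]]; exists u; split => //; lra.
have Qh : forall de, 0 < de -> exists Ss, Q Ss de.
  move=> de dep; have [u [hb hu]] := Hn' de dep.
  have [s Hs] := fin_all_exists (fun y => H2 y u).
  exists (A e0 u, [ffun y => s y]), u; split => // y k; rewrite ffunE Hs; exact: H1.
have [[S s] HSs] := pigeon Qm Qh.
pose g (k : option ((Y * 'I_N.+1) * bool)) : 'rV[R]_d -> R :=
  match k with
  | None => fun u => \sum_y p y * (dot (al y (s y)) u + be y (s y)) - B
  | Some (yi, true) => fun u => (dot (al yi.1 yi.2) u + be yi.1 yi.2) -
                       (dot (al yi.1 (s yi.1)) u + be yi.1 (s yi.1))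
  | Some (yi, false) => if yi \in S then fun _ => 0 else fun u =>
                        (dot (al yi.1 yi.2) u + be yi.1 yi.2) -
                        (dot (al yi.1 (s yi.1)) u + be yi.1 (s yi.1)) + e0
  end.
have ga : forall k, affine (g k).
  case=> [[yi []]|]; rewrite /g.
  + by apply: affine_sub; apply: affine_dot.
  + case: (yi \in S); first exact: affine_cst.
    by apply: affine_add; [apply: affine_sub; apply: affine_dot | apply: affine_cst].
  + apply: affine_sub; last exact: affine_cst.
    by apply: affine_sum => y; apply: affine_scale; apply: affine_dot.
have gh : forall eps, 0 < eps -> exists u, forall k, g k u <= eps.
  move=> eps ep; have [u [hb hu hA hk]] := HSs eps ep; exists u.
  rewrite /= in hA hk.
  case=> [[[y i] []]|]; rewrite /g /=.
  + by have := hk y i; lra.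
  + case: ifP => hi; first by lra.
    move: hi; rewrite -hA inE /= -(sel_eq H1 H2 (hk y)) => /negbT.
    rewrite -ltNge; lra.
  + move: hu; rewrite /expect.
    have eqs : forall y, p y * L u y = p y * (dot (al y (s y)) u + be y (s y)).
      by move=> y; rewrite (sel_eq H1 H2 (hk y)).
    rewrite (eq_bigr _ (fun y _ => eqs y)); lra.
have [us Hus] := poly_closure ga gh.
have hks : forall y k, dot (al y k) us + be y k <= dot (al y (s y)) us + be y (s y).
  by move=> y k; have := Hus (Some ((y, k), true)); rewrite /g /=; lra.
have opt : forall u', expect p (L us) <= expect p (L u').
  move=> u'; apply: le_trans (HB u').
  have := Hus None; rewrite /g /expect.
  have eqs : forall y, p y * L us y = p y * (dot (al y (s y)) us + be y (s y)).
    by move=> y; rewrite (sel_eq H1 H2 (hks y)).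
  rewrite (eq_bigr _ (fun y _ => eqs y)); lra.
have [u [hb _ hA _]] := HSs 1 ltr01.
rewrite /= in hA.
have act : forall y i, dot (al y i) us + be y i = L us y ->
    dot (al y i) (vf u) + be y i = L (vf u) y.
  move=> y i hi.
  have hin : (y, i) \in S.
    apply: contrapT => /negP hn.
    have := Hus (Some ((y, i), false)); rewrite /g /= (negbTE hn).
    rewrite (sel_eq H1 H2 (hks y)); lra.
  move: hin; rewrite -hA => hin.
  have := fintype.subsetP (Hvf u) _ hin; rewrite inE /= => h.
  apply/eqP; rewrite eq_le H1; lra.
have optv := mono H1 H2 pge opt act.
apply: hb; apply/(Hell p sp); apply: (Hrf (vf u) p sp).
exact: optv.
Qed.
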